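(* Let $K\ge1$, let $c\in T_K$, and let $M=\{s\in S(\theta): A_K+B_K\theta-c\le s\le c\}$, say $M=\{s_a,s_{a+1},\dots,s_b\}$ with $s_b=c$. Then the factor $P=\lambda(\delta(a))\lambda(\delta(a+1))\cdots\lambda(\delta(b-1))$ of $\Lambda_\theta$ is a palindrome and it occurs exactly once (namely as a suffix) in the prefix $\lambda(\delta(0))\lambda(\delta(1))\cdots\lambda(\delta(b-1))$ of $\Lambda_\theta$.
   Context: Fix an irrational $\theta$ with $1<\theta<2$. Let $S(\theta)=\{i+j\theta : i,j\in\mathbb{N}_0\}$ and let $s_0<s_1<s_2<\cdots$ be its elements in increasing order. Put $\delta(n)=s_{n+1}-s_n$. Let $\lambda$ be the map from the set of values $\{\delta(n):n\ge0\}$ to $\mathbb{N}_0$ that numbers the distinct values in order of first occurrence: $\lambda(\delta(0))=0$, and the $m$-th distinct value to appear in the sequence $\delta(0),\delta(1),\dots$ (counting from $m=0$) receives label $m$. The Lambda word is $\Lambda_\theta=\lambda(\delta(0))\lambda(\delta(1))\lambda(\delta(2))\cdots$. Every positive integer $K$ is either $K=\lfloor k\theta\rfloor+k$ or $K=\lfloor k/\theta\rfloor+k$ for a unique integer $k\ge1$ (and not both). In the first case set $(A_K,B_K)=(\lfloor k\theta\rfloor,k)$; in the second case set $(A_K,B_K)=(k,\lfloor k/\theta\rfloor)$. Define $N_K=\{s\in S(\theta): \min(A_K,B_K\theta)\le s\le \max(A_K,B_K\theta)\}$ and $T_K=\{s\in S(\theta): \max N_K\le s<\max N_{K+1}\}$.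 *)

(* Defs.v *)
From Stdlib Require Import Reals Lra Lia ZArith Arith.
Open Scope R_scope.

Definition irrational (t : R) : Prop :=
  forall p q : Z, q <> 0%Z -> t <> IZR p / IZR q.

Definition inS (t x : R) : Prop :=
  exists i j : nat, x = INR i + INR j * t.

Definition is_enum (t : R) (s : nat -> R) : Prop :=
  (forall n, s n < s (S n)) /\
  (forall n, inS t (s n)) /\
  (forall x, inS t x -> exists n, s n = x).

(* floor of a nonnegative real, as a natural number *)
Definition nfloor (x : R) : nat := Z.to_nat (Int_part x).

(* (A_K, B_K): K = floor(k t) + k  gives (floor(k t), k);
                K = floor(k / t) + k gives (k, floor(k / t)). *)
Definition AB_rel (t : R) (K A B : nat) : Prop :=
  (exists k : nat, (1 <= k)%nat /\ K = (nfloor (INR k * t) + k)%nat /\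
                   A = nfloor (INR k * t) /\ B = k) \/
  (exists k : nat, (1 <= k)%nat /\ K = (nfloor (INR k / t) + k)%nat /\
                   A = k /\ B = nfloor (INR k / t)).

(* N_K as a set, given A = A_K and B = B_K *)
Definition Nset (t : R) (A B : nat) (x : R) : Prop :=
  inS t x /\ Rmin (INR A) (INR B * t) <= x <= Rmax (INR A) (INR B * t).

Definition is_max (P : R -> Prop) (m : R) : Prop :=
  P m /\ forall x, P x -> x <= m.

(* c in T_K, given (A,B) = (A_K,B_K) and (A',B') = (A_{K+1},B_{K+1}) *)
Definition inT (t : R) (A B A' B' : nat) (c : R) : Prop :=
  inS t c /\ exists m1 m2, is_max (Nset t A B) m1 /\ is_max (Nset t A' B') m2 /\
                           m1 <= c < m2.

Definition delta (s : nat -> R) (n : nat) : R := s (S n) - s n.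

(* firstin d x m = least k < m with d k = x, or m if there is none *)
Fixpoint firstin (d : nat -> R) (x : R) (m : nat) : nat :=
  match m with
  | O => O
  | S m' => let r := firstin d x m' in
            if (r <? m')%nat then r
            else if Req_EM_T (d m') x then m' else m
  end.

Definition firstocc (d : nat -> R) (n : nat) : nat := firstin d (d n) (S n).

(* number of distinct values whose first occurrence lies before position m *)
Fixpoint count_new (d : nat -> R) (m : nat) : nat :=
  match m with
  | O => O
  | S m' => (count_new d m' + (if Nat.eqb (firstocc d m') m' then 1 else 0))%nat
  end.

(* Lambda word: label of d n = number of distinct values first occurring
   strictly before the first occurrence of the value d n *)
Definition Lambda (d : nat -> R) (n : nat) : nat := count_new d (firstocc d n).

(* Main.v *)
Require Import Defs.
From Stdlib Require Import Reals Lra Lia ZArith Arith.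
Open Scope R_scope.

Lemma firstin_spec (d : nat -> R) x m :
  ((firstin d x m < m)%nat /\ d (firstin d x m) = x /\
     forall k, (k < firstin d x m)%nat -> d k <> x) \/
  (firstin d x m = m /\ forall k, (k < m)%nat -> d k <> x).
Proof.
  induction m as [|m IH].
  - right; simpl; split; [reflexivity| intros; lia].
  - cbn [firstin].
    destruct (Nat.ltb_spec (firstin d x m) m) as [Hl|Hl].
    + destruct IH as [[H1 [H2 H3]]|[H1 H2]]; [|lia].
      left; repeat split; auto.
    + destruct IH as [[H1 [H2 H3]]|[H1 H2]]; [lia|].
      destruct (Req_EM_T (d m) x) as [He|He].
      * left; repeat split; [lia|auto|]. intros k Hk. apply H2; lia.
      * right; split; [reflexivity|]. intros k Hk.
        destruct (Nat.eq_dec k m); [subst; auto|apply H2; lia].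
Qed.

Lemma firstocc_spec (d : nat -> R) n :
  (firstocc d n <= n)%nat /\ d (firstocc d n) = d n /\
  forall k, (k < firstocc d n)%nat -> d k <> d n.
Proof.
  unfold firstocc.
  destruct (firstin_spec d (d n) (S n)) as [[H1 [H2 H3]]|[H1 H2]].
  - repeat split; auto; lia.
  - exfalso; apply (H2 n); auto.
Qed.

Lemma firstocc_fix (d : nat -> R) n : firstocc d (firstocc d n) = firstocc d n.
Proof.
  destruct (firstocc_spec d n) as [F1 [F2 F3]].
  set (f := firstocc d n) in *.
  destruct (firstocc_spec d f) as [G1 [G2 G3]].
  set (g := firstocc d f) in *.
  destruct (lt_eq_lt_dec g f) as [[Hl|He]|Hl]; auto.
  - exfalso. apply (F3 g Hl). congruence.
  - exfalso. apply (G3 f Hl). reflexivity.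
Qed.

Lemma count_new_mono (d : nat -> R) m m' : (m <= m')%nat -> (count_new d m <= count_new d m')%nat.
Proof.
  induction 1; auto. simpl. lia.
Qed.

Lemma Lambda_inj (d : nat -> R) n m : Lambda d n = Lambda d m -> d n = d m.
Proof.
  unfold Lambda. intros H.
  destruct (firstocc_spec d n) as [F1 [F2 F3]].
  destruct (firstocc_spec d m) as [G1 [G2 G3]].
  assert (Hs : forall f1 f2, firstocc d f1 = f1 -> (f1 < f2)%nat ->
     (count_new d f1 < count_new d f2)%nat).
  { intros f1 f2 Hf Hlt. apply Nat.lt_le_trans with (count_new d (S f1)).
    - simpl. rewrite Hf, Nat.eqb_refl. lia.
    - apply count_new_mono; lia. }
  destruct (lt_eq_lt_dec (firstocc d n) (firstocc d m)) as [[Hl|He]|Hl].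
  - exfalso. pose proof (Hs _ _ (firstocc_fix d n) Hl). lia.
  - rewrite <- F2, <- G2, He. reflexivity.
  - exfalso. pose proof (Hs _ _ (firstocc_fix d m) Hl). lia.
Qed.

Lemma nfloor_spec x : 0 <= x -> INR (nfloor x) <= x < INR (nfloor x) + 1.
Proof.
  intros Hx. unfold nfloor.
  destruct (base_Int_part x) as [H1 H2].
  assert (Hz : (0 <= Int_part x)%Z).
  { apply le_IZR. assert (IZR (Int_part x) > -1) by lra.
    destruct (Z_lt_le_dec (Int_part x) 0) as [Hl|Hl]; [|apply IZR_le in Hl; lra].
    assert (Int_part x <= -1)%Z as Hm by lia. apply IZR_le in Hm. lra. }
  rewrite INR_IZR_INZ, Z2Nat.id by exact Hz. lra.
Qed.

Lemma AB_props t K A B : 0 < t -> AB_rel t K A B ->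
  K = (A + B)%nat /\ INR B * t < INR A + 1 /\ INR A < (INR B + 1) * t.
Proof.
  intros Ht [[k [Hk [HK [HA HB]]]]|[k [Hk [HK [HA HB]]]]]; subst.
  - assert (0 <= INR k * t) by (apply Rmult_le_pos; [apply pos_INR|lra]).
    destruct (nfloor_spec (INR k * t) H). repeat split; [lra|]. rewrite Rmult_plus_distr_r, Rmult_1_l. lra.
  - assert (0 <= INR k / t) by (unfold Rdiv; apply Rmult_le_pos; [apply pos_INR|left; apply Rinv_0_lt_compat; lra]).
    destruct (nfloor_spec (INR k / t) H) as [H1 H2].
    set (f := INR (nfloor (INR k / t))) in *.
    assert (E : INR k / t * t = INR k) by (field; lra).
    assert (f * t <= INR k) by (rewrite <- E; apply Rmult_le_compat_r; lra).
    assert (INR k < (f+1) * t) by (rewrite <- E; apply Rmult_lt_compat_r; lra).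
    repeat split; [lia|lra|lra].
Qed.

Lemma AB_step t A B A' B' : 0 < t ->
  (A' + B' = A + B + 1)%nat ->
  INR B * t < INR A + 1 -> INR A < (INR B + 1) * t ->
  INR B' * t < INR A' + 1 -> INR A' < (INR B' + 1) * t ->
  (A' = S A /\ B' = B) \/ (A' = A /\ B' = S B).
Proof.
  intros Ht HS H1 H2 H3 H4.
  destruct (le_lt_dec A' (A+1)) as [Ha|Ha].
  - destruct (le_lt_dec A A') as [Hb|Hb].
    + destruct (Nat.eq_dec A' A); [right; lia| left; lia].
    + exfalso. assert (HB' : (B + 2 <= B')%nat) by lia.
      assert (HA' : (A' + 1 <= A)%nat) by lia.
      apply le_INR in HB', HA'. rewrite plus_INR in HB', HA'. simpl in HB', HA'.
      nra.
  - exfalso. assert (HB' : (B' + 1 <= B)%nat) by lia.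
    assert (HA' : (A + 2 <= A')%nat) by lia.
    apply le_INR in HB', HA'. rewrite plus_INR in HB', HA'. simpl in HB', HA'.
    nra.
Qed.

Lemma s_mono t s : is_enum t s -> forall n m, (n < m)%nat -> s n < s m.
Proof.
  intros [Hs _] n m H. induction H.
  - apply Hs.
  - specialize (Hs m). lra.
Qed.

Lemma s_lt_inv t s : is_enum t s -> forall n m, s n < s m -> (n < m)%nat.
Proof.
  intros He n m H. destruct (lt_eq_lt_dec n m) as [[H1|H1]|H1]; auto.
  - subst; lra.
  - pose proof (s_mono t s He _ _ H1). lra.
Qed.

Lemma Lambda_eq (d : nat -> R) n m : d n = d m -> Lambda d n = Lambda d m.
Proof.
  intros H. unfold Lambda. f_equal.
  destruct (firstocc_spec d n) as [F1 [F2 F3]].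
  destruct (firstocc_spec d m) as [G1 [G2 G3]].
  destruct (lt_eq_lt_dec (firstocc d n) (firstocc d m)) as [[Hl|He]|Hl]; auto.
  - exfalso. apply (G3 _ Hl). congruence.
  - exfalso. apply (F3 _ Hl). congruence.
Qed.

Lemma irr_contra t A B i1 j1 i2 j2 e : irrational t -> 0 < t -> 0 < e ->
  INR A - e = INR i1 + INR j1 * t -> INR B * t - e = INR i2 + INR j2 * t -> False.
Proof.
  intros Hirr Ht He H1 H2.
  set (p := (Z.of_nat A - Z.of_nat i1 + Z.of_nat i2)%Z).
  set (q := (Z.of_nat B + Z.of_nat j1 - Z.of_nat j2)%Z).
  assert (Hp : IZR p = INR A - INR i1 + INR i2).
  { unfold p. rewrite plus_IZR, minus_IZR, <- !INR_IZR_INZ. ring. }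
  assert (Hq : IZR q = INR B + INR j1 - INR j2).
  { unfold q. rewrite minus_IZR, plus_IZR, <- !INR_IZR_INZ. ring. }
  assert (Heq : IZR p = IZR q * t).
  { rewrite Hp, Hq. nra. }
  destruct (Z.eq_dec q 0) as [Hz|Hz].
  - rewrite Hz in Heq. simpl in Heq.
    assert (0 <= INR j1 * t) by (apply Rmult_le_pos; [apply pos_INR|lra]).
    pose proof (pos_INR i2). nra.
  - apply (Hirr p q Hz). rewrite Heq. field. apply not_0_IZR; exact Hz.
Qed.

Theorem lemma11 (t : R) (s : nat -> R) (K A B A' B' a b : nat) (c : R) :
  irrational t -> 1 < t < 2 ->
  is_enum t s ->
  (1 <= K)%nat ->
  AB_rel t K A B -> AB_rel t (S K) A' B' ->
  inT t A B A' B' c ->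
  (forall n, (a <= n <= b)%nat <-> (INR A + INR B * t - c <= s n <= c)) ->
  s b = c ->
  let L := Lambda (delta s) in
  (* P = L(a) ... L(b-1) is a palindrome *)
  (forall i, (i < b - a)%nat -> L (a + i)%nat = L (b - 1 - i)%nat) /\
  (* P occurs exactly once in L(0) ... L(b-1), namely as the suffix at a *)
  (forall p, (p + (b - a) <= b)%nat ->
     (forall i, (i < b - a)%nat -> L (p + i)%nat = L (a + i)%nat) -> p = a).
Proof.
  intros Hirr Ht He HK HAB HAB' HT Hab Hsb L.
  assert (Ht0 : 0 < t) by lra.
  destruct (AB_props t K A B Ht0 HAB) as [EK [P1 P2]].
  destruct (AB_props t (S K) A' B' Ht0 HAB') as [EK' [P1' P2']].
  assert (Hstep := AB_step t A B A' B' Ht0 ltac:(lia) P1 P2 P1' P2').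
  destruct HT as [HcS [m1 [m2 [[Hm1N Hm1] [[Hm2N Hm2] [Hc1 Hc2]]]]]].
  assert (NA : Nset t A B (INR A)).
  { split; [exists A, 0%nat; simpl; ring|split; [apply Rmin_l|apply Rmax_l]]. }
  assert (NB : Nset t A B (INR B * t)).
  { split; [exists 0%nat, B; simpl; ring|split; [apply Rmin_r|apply Rmax_r]]. }
  pose proof (Hm1 _ NA) as cA. pose proof (Hm1 _ NB) as cB.
  destruct Hm2N as [_ [_ Hm2R]].
  destruct He as [Hsinc [HS Hsurj]] eqn:Heq. clear Heq.
  set (R0 := INR A + INR B * t) in *.
  assert (Key : forall i j, INR i + INR j * t <= c -> (i <= A)%nat /\ (j <= B)%nat).
  { intros i j Hx.
    assert (Hx2 : INR i + INR j * t < Rmax (INR A') (INR B' * t)) by lra.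
    assert (Pi := pos_INR i). assert (Pj := pos_INR j).
    assert (Pj' : 0 <= INR j * t) by (apply Rmult_le_pos; lra).
    split.
    - destruct (le_lt_dec i A) as [Hl|Hl]; auto. exfalso.
      assert (Hi : (S A <= i)%nat) by lia. apply le_INR in Hi. rewrite S_INR in Hi.
      unfold Rmax in Hx2.
      destruct Hstep as [[E1 E2]|[E1 E2]]; subst A' B';
        destruct (Rle_dec _ _); rewrite ?S_INR in *; lra.
    - destruct (le_lt_dec j B) as [Hl|Hl]; auto. exfalso.
      assert (Hj : (S B <= j)%nat) by lia. apply le_INR in Hj. rewrite S_INR in Hj.
      assert (Hjt : (INR B + 1) * t <= INR j * t) by (apply Rmult_le_compat_r; lra).
      unfold Rmax in Hx2.
      destruct Hstep as [[E1 E2]|[E1 E2]]; subst A' B';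
        destruct (Rle_dec _ _); rewrite ?S_INR in *; lra. }
  assert (Refl : forall n, (a <= n <= b)%nat -> exists m, (a <= m <= b)%nat /\ s m = R0 - s n).
  { intros n Hn. apply Hab in Hn.
    destruct (HS n) as [i [j Hij]].
    destruct (Key i j ltac:(lra)) as [Hi Hj].
    destruct (Hsurj (INR (A - i) + INR (B - j) * t)) as [m Hm].
    { exists (A - i)%nat, (B - j)%nat. reflexivity. }
    rewrite !minus_INR in Hm by exact Hi || exact Hj.
    exists m. split; [apply Hab|]; unfold R0 in *; lra. }
  assert (Inv : forall n m, (a <= n <= b)%nat -> s m = R0 - s n -> (a <= m <= b)%nat).
  { intros n m Hn Hm. apply Hab in Hn. apply Hab. unfold R0 in *; lra. }
  assert (Hab0 : (a <= b)%nat).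
  { assert (H := proj2 (Hab b)). rewrite Hsb in H. unfold R0 in *.
    specialize (H ltac:(lra)). lia. }
  assert (U : forall k, (k <= b - a)%nat -> forall m, s m = R0 - s (a + k)%nat -> (m <= b - k)%nat).
  { induction k as [|k IH]; intros Hk m Hm.
    - rewrite Nat.add_0_r in Hm. pose proof (Inv a m ltac:(lia) Hm). lia.
    - destruct (Refl (a + k)%nat ltac:(lia)) as [m' [Hm' Em']].
      pose proof (IH ltac:(lia) m' Em').
      assert (s (a + k)%nat < s (a + S k)%nat) by (apply (s_mono t s He); lia).
      assert (s m < s m') by lra.
      pose proof (s_lt_inv t s He _ _ H1). lia. }
  assert (U' : forall k, (k <= b - a)%nat -> forall m, s m = R0 - s (b - k)%nat -> (a + k <= m)%nat).
  { induction k as [|k IH]; intros Hk m Hm.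
    - rewrite Nat.sub_0_r in Hm. pose proof (Inv b m ltac:(lia) Hm). lia.
    - destruct (Refl (b - k)%nat ltac:(lia)) as [m' [Hm' Em']].
      pose proof (IH ltac:(lia) m' Em').
      assert (s (b - S k)%nat < s (b - k)%nat) by (apply (s_mono t s He); lia).
      assert (s m' < s m) by lra.
      pose proof (s_lt_inv t s He _ _ H1). lia. }
  assert (Pal : forall k, (k <= b - a)%nat -> s (b - k)%nat = R0 - s (a + k)%nat).
  { intros k Hk.
    destruct (Refl (a + k)%nat ltac:(lia)) as [m [Hm Em]].
    pose proof (U k Hk m Em) as Hmk.
    destruct (Nat.eq_dec m (b - k)) as [E|E]; [subst m; exact Em|exfalso].
    set (k' := (b - m)%nat).
    assert (Em2 : s (a + k)%nat = R0 - s (b - k')%nat).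
    { replace (b - k')%nat with m by (unfold k'; lia). lra. }
    pose proof (U' k' ltac:(unfold k'; lia) _ Em2). unfold k' in *. lia. }
  split.
  - intros i Hi. unfold L. apply Lambda_eq. unfold delta.
    replace (S (b - 1 - i)) with (b - i)%nat by lia.
    replace (b - 1 - i)%nat with (b - S i)%nat by lia.
    replace (S (a + i)) with (a + S i)%nat by lia.
    rewrite (Pal i ltac:(lia)), (Pal (S i) ltac:(lia)). ring.
  - intros p Hp Hm.
    destruct (lt_eq_lt_dec p a) as [[Hl|E]|Hl]; [exfalso| exact E | lia].
    assert (Gap : forall i, (i < b - a)%nat -> delta s (p + i)%nat = delta s (a + i)%nat).
    { intros i Hi. apply Lambda_inj. apply Hm. exact Hi. }
    set (e := s a - s p).
    assert (Sh : forall i, (i <= b - a)%nat -> s (p + i)%nat = s (a + i)%nat - e).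
    { induction i as [|i IH]; intros Hi.
      - rewrite !Nat.add_0_r. unfold e. ring.
      - pose proof (Gap i ltac:(lia)) as G. unfold delta in G.
        replace (p + S i)%nat with (S (p + i)) by lia.
        replace (a + S i)%nat with (S (a + i)) by lia.
        rewrite (IH ltac:(lia)) in G. lra. }
    assert (He0 : 0 < e) by (unfold e; pose proof (s_mono t s He p a Hl); lra).
    destruct (Hsurj (INR A)) as [nA HnA]; [exists A, 0%nat; simpl; ring|].
    destruct (Hsurj (INR B * t)) as [nB HnB]; [exists 0%nat, B; simpl; ring|].
    assert (HnA' : (a <= nA <= b)%nat) by (apply Hab; unfold R0 in *; lra).
    assert (HnB' : (a <= nB <= b)%nat) by (apply Hab; unfold R0 in *; lra).
    pose proof (Sh (nA - a)%nat ltac:(lia)) as SA.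
    pose proof (Sh (nB - a)%nat ltac:(lia)) as SB.
    replace (a + (nA - a))%nat with nA in SA by lia.
    replace (a + (nB - a))%nat with nB in SB by lia.
    destruct (HS (p + (nA - a))%nat) as [i1 [j1 E1]].
    destruct (HS (p + (nB - a))%nat) as [i2 [j2 E2]].
    apply (irr_contra t A B i1 j1 i2 j2 e Hirr Ht0 He0); lra.
Qed.
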